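(* Let $\sigma,\lambda,\psi>0$, $0<\beta<1$, $\mu>0$. Consider the model $x_t=\hat E_t x_{t+1}-\sigma(i_t-\hat E_t\pi_{t+1})+\epsilon_t$, $\pi_t=\lambda x_t+\beta\hat E_t\pi_{t+1}$, $i_t=\max\{\psi\pi_t,-\mu\}$, where expectations are formed by the learning rule $\hat E_t Y_{t+j}=Y^e_t$ with $Y^e_t=Y^e_{t-1}+t^{-1}(Y_{t-1}-Y^e_{t-1})$, $Y_t=(x_t,\pi_t)'$ (so $Y^e_t$ is determined by data up to date $t-1$). Then the model is coherent and complete: at every date $t$, for every value of the predetermined forecast $Y^e_t\in\mathbb{R}^2$ and every value of the shock $\epsilon_t\in\mathbb{R}$, there exists exactly one $(x_t,\pi_t)\in\mathbb{R}^2$ solving the three equations.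
   Context: $x_t$ is the output gap, $\pi_t$ inflation, $i_t$ the nominal interest rate, $\epsilon_t$ an exogenous demand shock. Agents observe endogenous variables only with a one-period lag (lagged information), so the forecast $Y^e_t$ is taken as given when solving for date-$t$ outcomes. *)

(* Defs.v *)
From Stdlib Require Import Reals.
Open Scope R_scope.

(* The three date-t equations of the model, with the learning forecast
   hat E_t x_{t+1} = xe, hat E_t pi_{t+1} = pie  (Y^e_t = (xe, pie)')
   taken as given (lagged information), shock eps = epsilon_t. *)
Definition temporary_eq (sigma lambda beta psi mu xe pie eps x pi i : R) : Prop :=
  x = xe - sigma * (i - pie) + eps /\
  pi = lambda * x + beta * pie /\
  i = Rmax (psi * pi) (- mu).

(* Main.v *)
Require Import Defs.
From Stdlib Require Import Reals Lra Psatz.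
Open Scope R_scope.

Lemma rmax_mono (psi mu a b : R) : 0 < psi -> a <= b -> Rmax (psi*a) (-mu) <= Rmax (psi*b) (-mu).
Proof.
  intros Hp Hab. unfold Rmax.
  destruct (Rle_dec (psi*a) (-mu)); destruct (Rle_dec (psi*b) (-mu)); nra.
Qed.

Theorem proposition2 (sigma lambda beta psi mu : R)
  (Hsigma : 0 < sigma) (Hlambda : 0 < lambda) (Hpsi : 0 < psi)
  (Hbeta0 : 0 < beta) (Hbeta1 : beta < 1) (Hmu : 0 < mu) :
  forall (Ye : R * R) (eps : R),
    exists! Y : R * R,
      exists i : R,
        temporary_eq sigma lambda beta psi mu (fst Ye) (snd Ye) eps
          (fst Y) (snd Y) i.
Proof.
  intros [xe pie] eps; simpl.
  set (A := xe + sigma * pie + eps).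
  set (B := lambda * A + beta * pie).
  set (k := lambda * sigma).
  assert (Hk : 0 < k) by (unfold k; nra).
  assert (Hkp : 0 < 1 + k * psi) by nra.
  assert (Hsol : exists p, p + k * Rmax (psi * p) (-mu) = B).
  { destruct (Rle_dec (-mu) (psi * (B / (1 + k*psi)))) as [h|h].
    - exists (B / (1 + k*psi)). rewrite Rmax_left by lra. field. lra.
    - exists (B + k*mu). rewrite Rmax_right.
      + ring.
      + assert (psi * B < -mu * (1 + k*psi)).
        { apply Rnot_le_lt in h.
          replace (psi * (B / (1 + k * psi))) with ((psi*B) / (1+k*psi)) in h by (field; lra).
          apply (Rmult_lt_compat_r (1+k*psi)) in h; [|lra].
          unfold Rdiv in h. rewrite Rmult_assoc, Rinv_l in h by lra. lra. }
        nra. }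
  destruct Hsol as [p Hp].
  exists (A - sigma * Rmax (psi * p) (-mu), p). split.
  - exists (Rmax (psi * p) (-mu)). unfold temporary_eq; simpl.
    split; [unfold A; ring|]. split; [|reflexivity].
    unfold k, B in Hp. nra.
  - intros [x2 p2] [i2 [H1 [H2 H3]]]. simpl in *.
    assert (Hp2 : p2 + k * Rmax (psi * p2) (-mu) = B).
    { unfold k, B, A. rewrite <- H3. rewrite H2, H1. ring. }
    assert (p = p2).
    { destruct (Rtotal_order p p2) as [l|[e|l]]; auto.
      - pose proof (rmax_mono psi mu p p2 Hpsi (Rlt_le _ _ l)). nra.
      - pose proof (rmax_mono psi mu p2 p Hpsi (Rlt_le _ _ l)). nra. }
    rewrite <- H. f_equal. rewrite H1, H3, <- H. unfold A. ring.
Qed.
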